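(* Let $A$ and $B$ be non-clopen subsets of a finite topological space $X$ which are separated (i.e. $\overline{A}\cap B=A\cap\overline{B}=\emptyset$). Let $\tilde A=\{a\in Cent_X(A)\mid \Psi(a,\partial_X(B))<rad_X(A)\}$ and $\tilde B=\{b\in Cent_X(B)\mid \Psi(b,\partial_X(A))<rad_X(B)\}$. Then $rad_X(A\cup B)\le\max\{rad_X(A),rad_X(B)\}$. Moreover: (i) if $rad_X(A)>rad_X(B)$ and $Cent_X(A)\setminus\tilde A\ne\emptyset$, then $Cent_X(A\cup B)=Cent_X(A)\setminus\tilde A$ and $rad_X(A\cup B)=rad_X(A)$; (ii) if $rad_X(A)=rad_X(B)$ and $(Cent_X(A)\setminus\tilde A)\cup(Cent_X(B)\setminus\tilde B)\ne\emptyset$, then $Cent_X(A\cup B)=(Cent_X(A)\setminus\tilde A)\cup(Cent_X(B)\setminus\tilde B)$ and $rad_X(A\cup B)=rad_X(A)=rad_X(B)$.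
   Context: For a finite topological space $X$ and $x\in X$, $U_x$ denotes the minimal open set containing $x$. A nested sequence of open sets around $x$ is a finite sequence $U_0\subsetneq U_1\subsetneq\cdots\subsetneq U_m=X$ of open sets with $U_0=U_x$ such that for each $j$ there is no open set $V$ with $U_j\subsetneq V\subsetneq U_{j+1}$. The furtherness function $\Psi:X\times X\to\{0,1,\dots,|X|-1\}$ is defined by: $\Psi(x,y)$ is the smallest integer $k\ge 0$ such that there exists a nested sequence $(U_j)_{j\ge0}$ of open sets around $x$ with $y\in U_k$. For $a\in X$ and $B\subseteq X$, $\Psi(a,B)=\min_{b\in B}\Psi(a,b)$, and for $A,B\subseteq X$, $\Psi(A,B)=\min_{a\in A}\Psi(a,B)$, with the value $\infty$ (larger than every integer) if $A$ or $B$ is empty. $\partial_X(A)$ denotes the boundary of $A$ in $X$. The center of $A$ is $Cent_X(A)=\{a\in A\mid \Psi(a,\partial_X(A))\ge\Psi(b,\partial_X(A))\ \forall b\in A\}$, and the radius is $rad_X(A)=\Psi(Cent_X(A),\partial_X(A))$ (equal to $\Psi(a,\partial_X(A))$ for any $a\in Cent_X(A)$). *)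

(* Defs.v *)
From mathcomp Require Import all_boot all_order.
From mathcomp Require Import boolp.
Set Implicit Arguments. Unset Strict Implicit. Unset Printing Implicit Defensive.

Section FiniteTopology.
Variable T : finType.
Variable tau : {set {set T}}.

Definition is_topology : Prop :=
  [/\ set0 \in tau, [set: T] \in tau,
      {in tau &, forall U V, U :|: V \in tau} &
      {in tau &, forall U V, U :&: V \in tau}].

Definition ftop_open (U : {set T}) : bool := U \in tau.
Definition ftop_closed (F : {set T}) : bool := ~: F \in tau.

Definition Umin (x : T) : {set T} := \bigcap_(U in tau | x \in U) U.

Definition interior (A : {set T}) : {set T} := \bigcup_(U in tau | U \subset A) U.
Definition closure (A : {set T}) : {set T} := ~: interior (~: A).
Definition bd (A : {set T}) : {set T} := closure A :\: interior A.

Definition covers (U V : {set T}) : bool :=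
  (U \proper V) && [forall W in tau, ~~ ((U \proper W) && (W \proper V))].

(* A nested sequence of open sets around x is U_x :: s, i.e.
   U_0 = U_x, U_1, ..., U_m = X, with U_k = nth setT (Umin x :: s) k. *)
Definition nested (x : T) (s : seq {set T}) : Prop :=
  [/\ all ftop_open s, path covers (Umin x) s & last (Umin x) s = [set: T]].

(* Furtherness Psi(x,y): least k such that y \in U_k for some nested sequence
   around x.  Its value lies in {0,..,|X|-1}, so a search over iota 0 #|T|
   is exhaustive. *)
Definition Psi (x y : T) : nat :=
  find (fun k => `[< exists s, nested x s /\ k <= size s /\
                                y \in nth setT (Umin x :: s) k >])
       (iota 0 #|T|).

End FiniteTopology.

(* Naturals extended with infinity (value of Psi on empty sets). *)
Inductive enat := Fin of nat | Inf.

Definition ele (a b : enat) : bool :=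
  match a, b with
  | _, Inf => true
  | Inf, Fin _ => false
  | Fin m, Fin n => (m <= n)%N
  end.
Definition elt (a b : enat) : bool := ~~ ele b a.
Definition emin (a b : enat) : enat := if ele a b then a else b.
Definition emax (a b : enat) : enat := if ele a b then b else a.

Section Center.
Variables (T : finType) (tau : {set {set T}}).

Definition PsiS (a : T) (B : {set T}) : enat :=
  \big[emin/Inf]_(b in B) Fin (Psi tau a b).
Definition PsiSS (A B : {set T}) : enat :=
  \big[emin/Inf]_(a in A) PsiS a B.

Definition Cent (A : {set T}) : {set T} :=
  [set a in A | [forall b in A, ele (PsiS b (bd tau A)) (PsiS a (bd tau A))]].

Definition rad (A : {set T}) : enat := PsiSS (Cent A) (bd tau A).

Definition separated (A B : {set T}) : Prop :=
  closure tau A :&: B = set0 /\ A :&: closure tau B = set0.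

Definition clopen (A : {set T}) : bool := ftop_open tau A && ftop_closed tau A.

End Center.

(* Main.v *)
Require Import Defs.
From mathcomp Require Import all_boot all_order.
Set Implicit Arguments. Unset Strict Implicit. Unset Printing Implicit Defensive.

Lemma ele_refl a : ele a a. Proof. by case: a => //= n. Qed.
Lemma ele_trans a b c : ele a b -> ele b c -> ele a c.
Proof. by case: a => [x|]; case: b => [y|]; case: c => [z|] //=; apply: leq_trans. Qed.
Lemma ele_total a b : ele a b || ele b a.
Proof. by case: a => [x|]; case: b => [y|] //=; apply: leq_total. Qed.
Lemma ele_anti a b : ele a b -> ele b a -> a = b.
Proof.
case: a => [x|]; case: b => [y|] //= h1 h2.
by congr Fin; apply/eqP; rewrite eqn_leq h1 h2.
Qed.
Lemma elt_le a b : elt a b -> ele a b.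
Proof. rewrite /elt => h; have := ele_total a b; by rewrite (negbTE h) orbF. Qed.
Lemma ele_emax_l a b : ele a (emax a b).
Proof. rewrite /emax; case: ifP => // _; exact: ele_refl. Qed.
Lemma ele_emax_r a b : ele b (emax a b).
Proof.
rewrite /emax; case: ifP => h; first exact: ele_refl.
by have := ele_total a b; rewrite h.
Qed.
Lemma emin_l a b : ele (emin a b) a.
Proof.
rewrite /emin; case: ifP => h; first exact: ele_refl.
by have := ele_total a b; rewrite h.
Qed.
Lemma emin_r a b : ele (emin a b) b.
Proof. rewrite /emin; case: ifP => h //; exact: ele_refl. Qed.
Lemma ele_emin z a b : ele z a -> ele z b -> ele z (emin a b).
Proof. by rewrite /emin; case: ifP. Qed.

Lemma big_emin_seq_le (I : eqType) (r : seq I) (P : pred I) F i :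
  i \in r -> P i -> ele (\big[emin/Inf]_(j <- r | P j) F j) (F i).
Proof.
elim: r => // x r IH; rewrite in_cons big_cons => /orP [/eqP -> | ir] Pi.
  by rewrite Pi; exact: emin_l.
case: (P x); last exact: IH.
exact: ele_trans (emin_r _ _) (IH ir Pi).
Qed.

Lemma big_emin_le (I : finType) (P : {set I}) (F : I -> enat) i :
  i \in P -> ele (\big[emin/Inf]_(j in P) F j) (F i).
Proof. move=> iP; apply: big_emin_seq_le => //; exact: mem_index_enum. Qed.

Lemma big_emin_ge (I : finType) (P : {set I}) (F : I -> enat) z :
  (forall i, i \in P -> ele z (F i)) -> ele z (\big[emin/Inf]_(j in P) F j).
Proof.
move=> h; apply: (big_ind (ele z)) => //; first by case: z {h}.
exact: ele_emin.
Qed.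

Lemma exists_max_seq (I : eqType) (r : seq I) (g : I -> enat) x :
  x \in r -> exists2 c, c \in r & forall y, y \in r -> ele (g y) (g c).
Proof.
elim: r x => // a r IH x _.
case: r IH => [|b r] IH.
  exists a; first by rewrite inE.
  by move=> y; rewrite inE => /eqP ->; exact: ele_refl.
have [c cr hc] := IH b (mem_head _ _).
case/orP: (ele_total (g a) (g c)) => h.
- exists c; first by rewrite in_cons cr orbT.
  move=> y; rewrite in_cons => /orP [/eqP -> // | yr]; exact: hc.
- exists a; first exact: mem_head.
  move=> y; rewrite in_cons => /orP [/eqP -> | yr]; first exact: ele_refl.
  exact: ele_trans (hc _ yr) h.
Qed.

Lemma exists_max (I : finType) (S : {set I}) (g : I -> enat) x :
  x \in S -> exists2 c, c \in S & forall y, y \in S -> ele (g y) (g c).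
Proof.
rewrite -mem_enum => /(exists_max_seq g) [c]; rewrite mem_enum => cS hc.
by exists c => // y yS; apply: hc; rewrite mem_enum.
Qed.



Lemma sep_mem (T : finType) (X Y : {set T}) x :
  X :&: Y = set0 -> x \in X -> x \in Y -> False.
Proof.
move=> h hx hy; have: x \in X :&: Y by rewrite inE hx hy.
by rewrite h inE.
Qed.

Lemma intS (T : finType) (tau : {set {set T}}) (A : {set T}) x :
  x \in interior tau A -> x \in A.
Proof. by case/bigcupP => U /andP [_ sUA] xU; exact: subsetP sUA x xU. Qed.

Lemma int_mono (T : finType) (tau : {set {set T}}) (A B : {set T}) x :
  A \subset B -> x \in interior tau A -> x \in interior tau B.
Proof.
move=> sAB /bigcupP [U /andP [hU sUA] xU]; apply/bigcupP; exists U => //.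
by rewrite hU (subset_trans sUA sAB).
Qed.

Lemma int_meet (T : finType) (tau : {set {set T}}) (A B : {set T}) x : is_topology tau ->
  x \in interior tau A -> x \in interior tau B -> x \in interior tau (A :&: B).
Proof.
case=> _ _ _ HI /bigcupP [U /andP [hU sUA] xU] /bigcupP [V /andP [hV sVB] xV].
apply/bigcupP; exists (U :&: V); last by rewrite inE xU xV.
by rewrite HI // setISS.
Qed.

Lemma bdU (T : finType) (tau : {set {set T}}) (A B : {set T}) : is_topology tau ->
  separated tau A B -> bd tau (A :|: B) = bd tau A :|: bd tau B.
Proof.
move=> Htop [sAB sBA]; have HI := Htop; case: HI => _ _ _ HI.
apply/setP => x.
have hint : (x \in interior tau (A :|: B)) =
            (x \in interior tau A) || (x \in interior tau B).
  apply/idP/orP.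
  - case/bigcupP => U /andP [hU sU] xU.
    have: x \in A :|: B by apply: (subsetP sU x xU).
    rewrite inE => /orP [xA | xB].
    + left; have: x \notin Defs.closure tau B.
        by apply/negP => h; apply: (sep_mem sBA xA h).
      rewrite /Defs.closure inE negbK => /bigcupP [W /andP [hW sW] xW].
      apply/bigcupP; exists (U :&: W); last by rewrite inE xU xW.
      rewrite HI //=; apply/subsetP => y; rewrite inE => /andP [yU yW].
      have := subsetP sU y yU; have := subsetP sW y yW.
      rewrite !inE => yNB /orP [] // yB; by rewrite yB in yNB.
    + right; have: x \notin Defs.closure tau A.
        by apply/negP => h; apply: (sep_mem sAB h xB).
      rewrite /Defs.closure inE negbK => /bigcupP [W /andP [hW sW] xW].
      apply/bigcupP; exists (U :&: W); last by rewrite inE xU xW.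
      rewrite HI //=; apply/subsetP => y; rewrite inE => /andP [yU yW].
      have := subsetP sU y yU; have := subsetP sW y yW.
      rewrite !inE => yNA /orP [] // yA; by rewrite yA in yNA.
  - by case => h; apply: int_mono h; [exact: subsetUl | exact: subsetUr].
have hcl : (x \in Defs.closure tau (A :|: B)) =
           (x \in Defs.closure tau A) || (x \in Defs.closure tau B).
  rewrite /Defs.closure !inE setCU -negb_and; congr negb; apply/idP/andP => [h|[h1 h2]].
    by split; apply: int_mono h; [exact: subsetIl | exact: subsetIr].
  exact: int_meet.
have h1 : x \in Defs.closure tau A -> x \notin interior tau B.
  by move=> c; apply/negP => /intS xB; exact: (sep_mem sAB c xB).
have h2 : x \in Defs.closure tau B -> x \notin interior tau A.
  by move=> c; apply/negP => /intS xA; exact: (sep_mem sBA xA c).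
rewrite /bd in_setU !in_setD hint hcl; move: h1 h2.
case: (x \in Defs.closure tau A); case: (x \in Defs.closure tau B);
  case: (x \in interior tau A); case: (x \in interior tau B) => //= h1 h2;
  by [have := h1 isT | have := h2 isT].
Qed.

Lemma centP (T : finType) (tau : {set {set T}}) (S : {set T}) c :
  c \in Cent tau S -> c \in S /\
  forall y, y \in S -> ele (PsiS tau y (bd tau S)) (PsiS tau c (bd tau S)).
Proof. by rewrite inE => /andP [cS /forall_inP h]. Qed.

Lemma centI (T : finType) (tau : {set {set T}}) (S : {set T}) c :
  c \in S ->
  (forall y, y \in S -> ele (PsiS tau y (bd tau S)) (PsiS tau c (bd tau S))) ->
  c \in Cent tau S.
Proof. by move=> cS h; rewrite inE cS; apply/forall_inP. Qed.

Lemma rad_eq (T : finType) (tau : {set {set T}}) (S : {set T}) c :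
  c \in Cent tau S -> rad tau S = PsiS tau c (bd tau S).
Proof.
move=> cC; rewrite /rad /PsiSS; apply: ele_anti; first exact: big_emin_le.
apply: big_emin_ge => d dC; have [cS _] := centP cC; have [_ hd] := centP dC.
exact: hd c cS.
Qed.

Lemma rad_empty (T : finType) (tau : {set {set T}}) (S : {set T}) :
  S = set0 -> rad tau S = Inf.
Proof.
move=> E; rewrite /rad /PsiSS big_pred0 // => c.
by rewrite inE E in_set0.
Qed.

Lemma cent_ex (T : finType) (tau : {set {set T}}) (S : {set T}) x :
  x \in S -> exists c, c \in Cent tau S.
Proof.
move=> /(exists_max (fun y => PsiS tau y (bd tau S))) [c cS hc].
by exists c; apply: centI.
Qed.

Lemma rad_ge (T : finType) (tau : {set {set T}}) (S : {set T}) y :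
  y \in S -> ele (PsiS tau y (bd tau S)) (rad tau S).
Proof.
move=> yS; have [c cC] := cent_ex tau yS; rewrite (rad_eq cC).
by have [_ h] := centP cC; apply: h.
Qed.

Lemma rad_le (T : finType) (tau : {set {set T}}) (S : {set T}) y :
  y \in Cent tau S -> ele (rad tau S) (PsiS tau y (bd tau S)).
Proof. by move=> yC; rewrite (rad_eq yC); exact: ele_refl. Qed.

Lemma PsiS_le (T : finType) (tau : {set {set T}}) (X Y : {set T}) x :
  X \subset Y -> ele (PsiS tau x Y) (PsiS tau x X).
Proof.
move=> sXY; apply: big_emin_ge => b bX; apply: big_emin_le; exact: subsetP sXY b bX.
Qed.

Lemma PsiS_ge (T : finType) (tau : {set {set T}}) (X Y : {set T}) x z :
  ele z (PsiS tau x X) -> ele z (PsiS tau x Y) -> ele z (PsiS tau x (X :|: Y)).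
Proof.
move=> hX hY; apply: big_emin_ge => b; rewrite inE => /orP [] hb.
  exact: ele_trans hX (big_emin_le _ hb).
exact: ele_trans hY (big_emin_le _ hb).
Qed.

Theorem theorem2p25 (T : finType) (tau : {set {set T}}) (Htop : is_topology tau)
  (A B : {set T}) (nA : ~~ clopen tau A) (nB : ~~ clopen tau B)
  (sep : separated tau A B) :
  let At := [set a in Cent tau A | elt (PsiS tau a (bd tau B)) (rad tau A)] in
  let Bt := [set b in Cent tau B | elt (PsiS tau b (bd tau A)) (rad tau B)] in
  ele (rad tau (A :|: B)) (emax (rad tau A) (rad tau B)) /\
  (elt (rad tau B) (rad tau A) -> Cent tau A :\: At != set0 ->
     Cent tau (A :|: B) = Cent tau A :\: At /\ rad tau (A :|: B) = rad tau A) /\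
  (rad tau A = rad tau B ->
     (Cent tau A :\: At) :|: (Cent tau B :\: Bt) != set0 ->
     Cent tau (A :|: B) = (Cent tau A :\: At) :|: (Cent tau B :\: Bt) /\
     rad tau (A :|: B) = rad tau A /\ rad tau A = rad tau B).
Proof.
move=> At Bt.
have E := bdU Htop sep.
have hfA y : ele (PsiS tau y (bd tau (A :|: B))) (PsiS tau y (bd tau A)).
  by rewrite E; apply: PsiS_le; exact: subsetUl.
have hfB y : ele (PsiS tau y (bd tau (A :|: B))) (PsiS tau y (bd tau B)).
  by rewrite E; apply: PsiS_le; exact: subsetUr.
have hfge y z : ele z (PsiS tau y (bd tau A)) -> ele z (PsiS tau y (bd tau B)) ->
    ele z (PsiS tau y (bd tau (A :|: B))).
  by rewrite E; apply: PsiS_ge.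
have hfA' y z : ele z (PsiS tau y (bd tau (A :|: B))) -> ele z (PsiS tau y (bd tau A)).
  by move=> h; apply: ele_trans h (hfA y).
have hfB' y z : ele z (PsiS tau y (bd tau (A :|: B))) -> ele z (PsiS tau y (bd tau B)).
  by move=> h; apply: ele_trans h (hfB y).
have charC r c : c \in A :|: B -> ele r (PsiS tau c (bd tau (A :|: B))) ->
    (forall y, y \in A :|: B -> ele (PsiS tau y (bd tau (A :|: B))) r) ->
    (forall y, (y \in Cent tau (A :|: B)) =
       (y \in A :|: B) && ele r (PsiS tau y (bd tau (A :|: B)))) /\
    rad tau (A :|: B) = r.
  move=> cAB hc hmax.
  have hy y : (y \in Cent tau (A :|: B)) =
       (y \in A :|: B) && ele r (PsiS tau y (bd tau (A :|: B))).
    apply/idP/andP => [yC | [yAB hy]].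
      have [yAB h] := centP yC; split => //; exact: ele_trans hc (h c cAB).
    by apply: centI => // z zAB; exact: ele_trans (hmax z zAB) hy.
  split => //; have cC : c \in Cent tau (A :|: B) by rewrite hy cAB hc.
  by rewrite (rad_eq cC); apply: ele_anti => //; exact: hmax.
split.
  have [E0|[x xAB]] := set_0Vmem (A :|: B).
    have : A :|: B == set0 by rewrite E0.
    rewrite setU_eq0 => /andP [/eqP EA /eqP EB].
    by rewrite (rad_empty tau E0) (rad_empty tau EA) (rad_empty tau EB).
  have [c cC] := cent_ex tau xAB; rewrite (rad_eq cC).
  have [cAB _] := centP cC; case/setUP: cAB => [cA|cB].
    apply: ele_trans (ele_emax_l _ (rad tau B)).
    exact: ele_trans (hfA c) (rad_ge tau cA).
  apply: ele_trans (ele_emax_r (rad tau A) _).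
  exact: ele_trans (hfB c) (rad_ge tau cB).
split.
  move=> lt /set0Pn [c]; rewrite inE => /andP [cNAt cCA].
  have hcB : ele (rad tau A) (PsiS tau c (bd tau B)).
    by move: cNAt; rewrite /At inE cCA /= /elt negbK.
  have cA : c \in A by have [] := centP cCA.
  have hmax y : y \in A :|: B -> ele (PsiS tau y (bd tau (A :|: B))) (rad tau A).
    case/setUP => [yA|yB]; first exact: ele_trans (hfA y) (rad_ge tau yA).
    apply: ele_trans (hfB y) (ele_trans (rad_ge tau yB) (elt_le lt)).
  have hcAB : c \in A :|: B by rewrite inE cA.
  have [hC hr] := charC (rad tau A) c hcAB (hfge _ _ (rad_le cCA) hcB) hmax.
  split => //; apply/setP => y; rewrite hC.
  apply/andP/idP => [[yAB hy] | ].
  - have hyA := hfA' _ _ hy; have hyB := hfB' _ _ hy.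
    case/setUP: yAB => [yA|yB]; last first.
      by exfalso; move: lt; rewrite /elt (ele_trans hyB (rad_ge tau yB)).
    rewrite in_setD; apply/andP; split; last first.
      by apply: centI => // z zA; exact: ele_trans (rad_ge tau zA) hyA.
    by rewrite /At inE negb_and /elt negbK hyB orbT.
  - rewrite in_setD => /andP [yNAt yCA]; have yA := (centP yCA).1.
    split; first by rewrite inE yA.
    apply: hfge; first exact: rad_le yCA.
    by move: yNAt; rewrite /At inE yCA /= /elt negbK.
move=> eqr /set0Pn [c cS].
have hS y : y \in (Cent tau A :\: At) :|: (Cent tau B :\: Bt) ->
    (y \in A :|: B) && ele (rad tau A) (PsiS tau y (bd tau (A :|: B))).
  rewrite in_setU !in_setD => /orP [/andP [yNAt yC] | /andP [yNBt yC]].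
    have yA := (centP yC).1; rewrite inE yA /=.
    apply: hfge; first exact: rad_le yC.
    by move: yNAt; rewrite /At inE yC /= /elt negbK.
  have yB := (centP yC).1; rewrite inE yB orbT /= eqr.
  apply: hfge; last exact: rad_le yC.
  by move: yNBt; rewrite /Bt inE yC /= /elt negbK.
have hmax y : y \in A :|: B -> ele (PsiS tau y (bd tau (A :|: B))) (rad tau A).
  case/setUP => [yA|yB]; first exact: ele_trans (hfA y) (rad_ge tau yA).
  by rewrite eqr; exact: ele_trans (hfB y) (rad_ge tau yB).
have /andP [cAB hc] := hS c cS.
have [hC hr] := charC (rad tau A) c cAB hc hmax.
split; last by split.
apply/setP => y; rewrite hC; apply/idP/idP => [/andP [yAB hy] | /hS //].
have hyA := hfA' _ _ hy; have hyB := hfB' _ _ hy.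
rewrite in_setU !in_setD; case/setUP: yAB => [yA|yB].
  have yC : y \in Cent tau A.
    by apply: centI => // z zA; exact: ele_trans (rad_ge tau zA) hyA.
  by rewrite yC /At inE yC /= /elt negbK hyB.
have yC : y \in Cent tau B.
  by apply: centI => // z zB; rewrite eqr in hyB; exact: ele_trans (rad_ge tau zB) hyB.
by rewrite yC /Bt inE yC /= /elt negbK -eqr hyA orbT.
Qed.
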